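(* Let $P$ be a minimal Fano polytope in $\mathbb{R}^3$ with vertex set $\{x_1,x_2,x_3,x_4,x_5\}$ such that $x_2,x_3,x_4,x_5$ are coplanar and are the vertices of a parallelogram. Then, up to the action of $GL(3,\mathbb{Z})$, $P$ is the convex hull of $\{(1,0,0),(0,1,0),(-1,-1,0),(1,1,1),(0,0,-1)\}$.
   Context: A Fano polytope is a convex polytope $P\subset\mathbb{R}^3$ with vertices in $\mathbb{Z}^3$ such that the only lattice point of $P$ that is not a vertex is the origin, which lies strictly in the interior of $P$. A Fano polytope with vertex set $\{x_1,\ldots,x_k\}$ is minimal if for every $j$ the convex hull of $\{x_1,\ldots,x_k\}\setminus\{x_j\}$ is not a Fano polytope. *)

(* Defs.v *)
From mathcomp Require Import all_boot all_order all_algebra.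
From mathcomp Require Import reals.
Set Implicit Arguments. Unset Strict Implicit. Unset Printing Implicit Defensive.
Import Order.TTheory GRing.Theory Num.Theory.
Local Open Scope ring_scope.

Definition lat := 'cV[int]_3.

Definition pt (a b c : int) : lat := \col_(i < 3) nth 0 [:: a; b; c] i.

Definition toR (R : realType) (v : lat) : 'cV[R]_3 := map_mx (fun z : int => z%:~R) v.

Definition in_hull (R : realType) (V : seq lat) (p : 'cV[R]_3) : Prop :=
  exists c : 'I_(size V) -> R,
    (forall i, 0 <= c i) /\ \sum_i c i = 1 /\
    p = \sum_i c i *: toR R (nth 0 V i).

Definition origin_interior (R : realType) (V : seq lat) : Prop :=
  exists e : R, 0 < e /\
    forall y : 'cV[R]_3, \sum_(i < 3) y i 0 ^+ 2 < e ^+ 2 -> in_hull V y.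

Definition fano (R : realType) (V : seq lat) : Prop :=
  (forall v, v \in V -> ~ in_hull (rem v V) (toR R v)) /\
  (forall p : lat, in_hull V (toR R p) -> p \in V \/ p = 0) /\
  origin_interior R V.

Definition minimal_fano (R : realType) (V : seq lat) : Prop :=
  fano R V /\ forall v, v \in V -> ~ fano R (rem v V).

Definition GL3Z (A : 'M[int]_3) : bool := A \in unitmx.

(* Main.v *)
Require Import Defs.
From mathcomp Require Import all_boot all_order all_algebra.
From mathcomp Require Import reals.
From mathcomp Require Import ring lra zify.
Import Order.TTheory GRing.Theory Num.Theory.
Local Open Scope ring_scope.

Section Cover.
Variable R : realType.

Definition isZ (x : R) := exists z : int, x = z%:~R.

Definition inP (a b c : R) :=
  [/\ a <= 1, a <= 3*b+1, a <= 3*c+1, 3*b <= 2*a+1 & 3*c <= 2*a+1].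

Lemma isZ_shift (x : R) (k : int) (z : int) : isZ (k%:~R * x + z%:~R) -> (k = 1 \/ k = -1) -> isZ x.
Proof.
move=> [w Hw] [Hk|Hk]; subst k.
  exists (w - z); rewrite intrD intrN -Hw mul1r; ring.
exists (z - w); rewrite intrD intrN -Hw mulN1r; ring.
Qed.

Lemma notZ01 (x : R) : 0 < x -> x < 1 -> ~ isZ x.
Proof.
move=> h0 h1 [z Hz]; subst x.
have a1 : (0 < z)%R by rewrite -(ltr0z R).
have a2 : (z < 1)%R by rewrite -(ltrz1 R).
lia.
Qed.

Lemma isZ_le1 (x : R) : 0 < x -> x <= 1 -> isZ x -> x = 1.
Proof.
move=> h0 h1 [z Hz]; subst x.
have a1 : (0 < z)%R by rewrite -(ltr0z R).
have a2 : (z <= 1)%R by rewrite -(lerz1 R).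
have -> : z = 1 by lia.
by [].
Qed.

Lemma fl (x : R) : (Num.floor x)%:~R <= x /\ x < (Num.floor x)%:~R + 1.
Proof. split; [exact: floor_le | by have := lt_succ_floor x; rewrite intrD]. Qed.

End Cover.
Arguments isZ {R}.
Arguments inP {R}.
Arguments isZ_shift {R x k z}.
Arguments notZ01 {R x}.
Arguments isZ_le1 {R x}.
Arguments fl {R}.

Section Cover2.
Variable R : realType.

Definition Concl (a b c : R) := exists k i j l : int,
  inP (k%:~R * a + i%:~R) (k%:~R * b + j%:~R) (k%:~R * c + l%:~R) /\
  ~ (isZ (k%:~R * a + i%:~R) /\ isZ (k%:~R * b + j%:~R) /\ isZ (k%:~R * c + l%:~R)).

Lemma e1 : ((1:int)%:~R : R) = 1. Proof. by []. Qed.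
Lemma eN1 : ((-1:int)%:~R : R) = -1. Proof. by rewrite intrN. Qed.
Lemma e2 : ((2:int)%:~R : R) = 2. Proof. by []. Qed.
Lemma eN2 : ((-2:int)%:~R : R) = -2. Proof. by rewrite intrN. Qed.

Ltac simp := rewrite ?(intrD, intrN, intrM, e1, eN1, e2, eN2).

Lemma case1 (a b c : R) (fa fu fv d1 d2 : int) :
  ~ (isZ a /\ isZ b /\ isZ c) ->
  0 <= a - fa%:~R < 1 ->
  - ((a - fa%:~R) + 2) / 6 <= (b - (a - fa%:~R) / 2 - fu%:~R) - d1%:~R <= ((a - fa%:~R) + 2) / 6 ->
  - ((a - fa%:~R) + 2) / 6 <= (c - (a - fa%:~R) / 2 - fv%:~R) - d2%:~R <= ((a - fa%:~R) + 2) / 6 ->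
  Concl a b c.
Proof.
move=> Hn /andP[ha1 ha2] /andP[hb1 hb2] /andP[hc1 hc2].
exists 1, (- fa), (- fu - d1), (- fv - d2); split.
  simp; split; lra.
move=> [h1 [h2 h3]]; apply: Hn; split; last split.
- by apply: (isZ_shift h1); left.
- by apply: (isZ_shift h2); left.
- by apply: (isZ_shift h3); left.
Qed.

Lemma case2 (a b c : R) (fa fu fv : int) :
  ~ (isZ a /\ isZ b /\ isZ c) ->
  0 <= a - fa%:~R < 1 ->
  1/2 - (3 - (a - fa%:~R)) / 6 <= (b - (a - fa%:~R) / 2 - fu%:~R) <= 1/2 + (3 - (a - fa%:~R)) / 6 ->
  1/2 - (3 - (a - fa%:~R)) / 6 <= (c - (a - fa%:~R) / 2 - fv%:~R) <= 1/2 + (3 - (a - fa%:~R)) / 6 ->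
  Concl a b c.
Proof.
move=> Hn /andP[ha1 ha2] /andP[hb1 hb2] /andP[hc1 hc2].
exists (-1), (fa + 1), (fu + 1), (fv + 1); split.
  simp; split; lra.
move=> [h1 [h2 h3]]; apply: Hn; split; last split.
- by apply: (isZ_shift h1); right.
- by apply: (isZ_shift h2); right.
- by apply: (isZ_shift h3); right.
Qed.

Lemma case3 (a b c : R) (fa fu fv d1 : int) :
  0 <= a - fa%:~R < 1 ->
  - (a - fa%:~R) / 6 < (b - (a - fa%:~R) / 2 - fu%:~R) - d1%:~R < (a - fa%:~R) / 6 ->
  ((a - fa%:~R) + 2) / 6 < (c - (a - fa%:~R) / 2 - fv%:~R) < 1 - ((a - fa%:~R) + 2) / 6 ->
  Concl a b c.
Proof.
move=> /andP[ha1 ha2] /andP[hb1 hb2] /andP[hc1 hc2].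
have [hlt|hge] := ltP (a - fa%:~R) (1/2).
  exists 2, (- (2 * fa)), (- (2 * fu) - 2 * d1), (- (2 * fv) - 1); split.
    simp; split; lra.
  move=> [h1 _]; move: h1; apply: notZ01; simp; lra.
exists (-2), (2 * fa + 2), (2 * fu + 1 + 2 * d1), (2 * fv + 2); split.
  simp; split; lra.
move=> [h1 [h2 _]].
have h1' := isZ_le1 _ _ h1.
have := notZ01 _ _ h2; apply.
- have := h1'; simp; move=> h; have {}h := h ltac:(lra) ltac:(lra); lra.
- have := h1'; simp; move=> h; have {}h := h ltac:(lra) ltac:(lra); lra.
Qed.

End Cover2.
Arguments Concl {R}.
Arguments case1 {R a b c fa fu fv d1 d2}.
Arguments case2 {R a b c fa fu fv}.
Arguments case3 {R a b c fa fu fv d1}.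

Section Cover3.
Variable R : realType.

Lemma inP_swap (a b c : R) : inP a b c -> inP a c b.
Proof. by case. Qed.

Lemma Concl_swap (a b c : R) : Concl a c b -> Concl a b c.
Proof.
move=> [k [i [j [l [h1 h2]]]]]; exists k, i, l, j; split; first exact: inP_swap.
by move=> [x [y z]]; apply: h2.
Qed.

Lemma classify (a0 U : R) : 0 <= a0 < 1 -> 0 <= U < 1 ->
  [/\ (exists d : int, - (a0 + 2) / 6 <= U - d%:~R <= (a0 + 2) / 6)
        \/ (1/2 - (3 - a0) / 6 <= U <= 1/2 + (3 - a0) / 6),
      (1/2 - (3 - a0) / 6 <= U <= 1/2 + (3 - a0) / 6)
        \/ (exists d : int, - a0 / 6 < U - d%:~R < a0 / 6) &
      (exists d : int, - (a0 + 2) / 6 <= U - d%:~R <= (a0 + 2) / 6)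
        \/ ((a0 + 2) / 6 < U < 1 - (a0 + 2) / 6)].
Proof.
move=> /andP[h1 h2] /andP[h3 h4].
have d0 : U - (0:int)%:~R = U by rewrite subr0.
have d1 : U - (1:int)%:~R = U - 1 by [].
split.
- have [h|h] := leP U ((a0 + 2) / 6).
    by left; exists 0; rewrite d0; apply/andP; split; lra.
  have [h'|h'] := leP (1 - (a0 + 2) / 6) U.
    by left; exists 1; rewrite d1; apply/andP; split; lra.
  by right; apply/andP; split; lra.
- have [h|h] := ltP U (a0 / 6).
    by right; exists 0; rewrite d0; apply/andP; split; lra.
  have [h'|h'] := ltP (1 - a0 / 6) U.
    by right; exists 1; rewrite d1; apply/andP; split; lra.
  by left; apply/andP; split; lra.
- have [h|h] := leP U ((a0 + 2) / 6).
    by left; exists 0; rewrite d0; apply/andP; split; lra.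
  have [h'|h'] := leP (1 - (a0 + 2) / 6) U.
    by left; exists 1; rewrite d1; apply/andP; split; lra.
  by right; apply/andP; split; lra.
Qed.

Lemma covering (a b c : R) : ~ (isZ a /\ isZ b /\ isZ c) -> Concl a b c.
Proof.
move=> Hn.
have [fa1 fa2] := fl a.
set fa := Num.floor a in fa1 fa2.
set a0 := a - fa%:~R.
have ha : 0 <= a0 < 1 by apply/andP; split; rewrite /a0; lra.
have [fu1 fu2] := fl (b - a0 / 2).
set fu := Num.floor (b - a0 / 2) in fu1 fu2.
have [fv1 fv2] := fl (c - a0 / 2).
set fv := Num.floor (c - a0 / 2) in fv1 fv2.
have hU : 0 <= b - a0 / 2 - fu%:~R < 1 by apply/andP; split; lra.
have hV : 0 <= c - a0 / 2 - fv%:~R < 1 by apply/andP; split; lra.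
have [cU1 cU2 cU3] := classify _ _ ha hU.
have [cV1 cV2 cV3] := classify _ _ ha hV.
case: cU1 => [[d1 hd1]|hH1].
  case: cV1 => [[d2 hd2]|hH2].
    exact: (case1 Hn ha hd1 hd2).
  case: cU2 => [hH1|[e1 he1]].
    exact: (case2 Hn ha hH1 hH2).
  case: cV3 => [[d2 hd2]|hs2].
    exact: (case1 Hn ha hd1 hd2).
  exact: (case3 ha he1 hs2).
case: cV1 => [[d2 hd2]|hH2]; last exact: (case2 Hn ha hH1 hH2).
case: cV2 => [hH2|[e2 he2]].
  exact: (case2 Hn ha hH1 hH2).
case: cU3 => [[d1 hd1]|hs1].
  exact: (case1 Hn ha hd1 hd2).
apply: Concl_swap; exact: (case3 ha he2 hs1).
Qed.

End Cover3.
Arguments covering {R a b c}.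

Section Hull.
Variable R : realType.

Lemma sum_pick (M : zmodType) (W : seq lat) (x : lat) (G : M) :
  uniq W -> x \in W ->
  \sum_(i < size W) (if x == nth 0 W i then G else 0) = G.
Proof.
move=> uW xW.
have i0lt : (index x W < size W)%N by rewrite index_mem.
rewrite (bigD1 (Ordinal i0lt)) //= nth_index // eqxx big1 ?addr0 //.
move=> i /negP ne; case: ifP => // /eqP ex; exfalso; apply: ne.
apply/eqP/val_inj => /=; apply/eqP.
by rewrite -(nth_uniq 0 _ _ uW) // -ex nth_index.
Qed.

Lemma hull_sub (V W : seq lat) (y : 'cV[R]_3) :
  uniq W -> {subset V <= W} -> in_hull V y -> in_hull W y.
Proof.
move=> uW sVW [c [c0 [c1 cy]]].
exists (fun i : 'I_(size W) => \sum_(j < size V) (if nth 0 V j == nth 0 W i then c j else 0)).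
split; [|split].
- move=> i; apply: sumr_ge0 => j _; case: ifP => //.
- rewrite exchange_big /= -c1; apply: eq_bigr => j _.
  rewrite (eq_bigr (fun i : 'I_(size W) => if nth 0 V j == nth 0 W i then c j else 0)) //.
  apply: sum_pick => //; apply: sVW; exact: mem_nth.
- rewrite cy.
  transitivity (\sum_(i < size W) \sum_(j < size V)
      (if nth 0 V j == nth 0 W i then c j *: toR R (nth 0 V j) else 0)).
    rewrite exchange_big /=; apply: eq_bigr => j _.
    by rewrite sum_pick //; apply: sVW; exact: mem_nth.
  apply: eq_bigr => i _; rewrite scaler_suml; apply: eq_bigr => j _.
  by case: ifP => [/eqP ->|]; rewrite ?scale0r.
Qed.

Lemma hull_perm (V W : seq lat) (y : 'cV[R]_3) :
  uniq W -> perm_eq V W -> in_hull V y -> in_hull W y.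
Proof. by move=> uW pVW; apply: hull_sub => // x; rewrite (perm_mem pVW). Qed.

Lemma interior_perm (V W : seq lat) :
  uniq W -> perm_eq V W -> origin_interior R V -> origin_interior R W.
Proof.
move=> uW pVW [e [e0 He]]; exists e; split => // y hy.
move: (He y hy); apply: hull_perm.
all: by [].
Qed.

End Hull.
Arguments hull_perm {R V W y}.
Arguments interior_perm {R V W}.

Section Hull2.
Variable R : realType.
Implicit Types (a b c d e : lat).

Definition H5 a b c d e (y : 'cV[R]_3) := exists c1 c2 c3 c4 c5 : R,
  [/\ [/\ 0 <= c1, 0 <= c2, 0 <= c3, 0 <= c4 & 0 <= c5],
      c1 + c2 + c3 + c4 + c5 = 1 &
      y = c1 *: toR R a + c2 *: toR R b + c3 *: toR R c + c4 *: toR R d + c5 *: toR R e].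

Definition H4 a b c d (y : 'cV[R]_3) := exists c1 c2 c3 c4 : R,
  [/\ [/\ 0 <= c1, 0 <= c2, 0 <= c3 & 0 <= c4],
      c1 + c2 + c3 + c4 = 1 &
      y = c1 *: toR R a + c2 *: toR R b + c3 *: toR R c + c4 *: toR R d].

Lemma hull5E a b c d e y : in_hull [:: a; b; c; d; e] y <-> H5 a b c d e y.
Proof.
split.
  move=> [f [f0 [f1 fy]]].
  exists (f 0), (f 1), (f 2%:R), (f 3%:R), (f 4%:R).
  move: f1 fy; rewrite !big_ord_recr !big_ord0 /= !add0r => f1 fy.
  split.
  + by split; apply: f0.
  + rewrite -f1; congr (_ + _ + _ + _ + _); congr f; exact: val_inj.
  + rewrite fy; congr (_ + _ + _ + _ + _); congr (_ *: _); congr f; exact: val_inj.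
move=> [c1 [c2 [c3 [c4 [c5 [[h1 h2 h3 h4 h5] hs hy]]]]]].
exists (fun i : 'I_5 => nth 0 [:: c1; c2; c3; c4; c5] i).
split; [|split].
- by case=> [[|[|[|[|[|?]]]]] ?] //=.
- by rewrite !big_ord_recr !big_ord0 /= !add0r.
- by rewrite !big_ord_recr !big_ord0 /= !add0r.
Qed.

Lemma hull4E a b c d y : in_hull [:: a; b; c; d] y <-> H4 a b c d y.
Proof.
split.
  move=> [f [f0 [f1 fy]]].
  exists (f 0), (f 1), (f 2%:R), (f 3%:R).
  move: f1 fy; rewrite !big_ord_recr !big_ord0 /= !add0r => f1 fy.
  split.
  + by split; apply: f0.
  + rewrite -f1; congr (_ + _ + _ + _); congr f; exact: val_inj.
  + rewrite fy; congr (_ + _ + _ + _); congr (_ *: _); congr f; exact: val_inj.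
move=> [c1 [c2 [c3 [c4 [[h1 h2 h3 h4] hs hy]]]]].
exists (fun i : 'I_4 => nth 0 [:: c1; c2; c3; c4] i).
split; [|split].
- by case=> [[|[|[|[|?]]]] ?] //=.
- by rewrite !big_ord_recr !big_ord0 /= !add0r.
- by rewrite !big_ord_recr !big_ord0 /= !add0r.
Qed.

End Hull2.

Section Hull3.
Variable R : realType.

Lemma sum3 (F : 'I_3 -> R) : \sum_(i < 3) F i = F 0 + F 1 + F 2%:R.
Proof.
rewrite !big_ord_recr big_ord0 /= add0r.
by congr (_ + _ + _); congr F; apply: val_inj.
Qed.

Lemma small_mult {e : R} (z : 'cV[R]_3) : 0 < e -> exists2 d : R, 0 < d &
  forall s, (s = d \/ s = - d) -> \sum_(i < 3) (s *: z) i 0 ^+ 2 < e ^+ 2.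
Proof.
move=> e0.
set S := \sum_(i < 3) z i 0 ^+ 2.
have S0 : 0 <= S by apply: sumr_ge0 => i _; apply: sqr_ge0.
exists (e / (1 + S)); first by apply: divr_gt0 => //; lra.
move=> s hs.
have -> : \sum_(i < 3) (s *: z) i 0 ^+ 2 = s ^+ 2 * S.
  rewrite /S mulr_sumr; apply: eq_bigr => i _; rewrite mxE exprMn //.
have -> : s ^+ 2 = (e / (1 + S)) ^+ 2 by case: hs => ->; rewrite ?sqrrN.
rewrite expr_div_n -mulrA.
have h1 : 0 < 1 + S by lra.
have h2 : S / ((1 + S) ^+ 2) < 1.
  rewrite ltr_pdivrMr; last exact: exprn_gt0.
  rewrite mul1r; nra.
rewrite -[ltRHS]mulr1 ltr_pM2l; last exact: exprn_gt0.
by rewrite mulrC.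
Qed.

Lemma interior_test (V : seq lat) (z : 'cV[R]_3) : origin_interior R V ->
  exists2 d : R, 0 < d & in_hull V (d *: z) /\ in_hull V ((- d) *: z).
Proof.
move=> [e [e0 He]].
have [d d0 Hd] := small_mult z e0.
exists d => //; split; apply: He; apply: Hd; by [left|right].
Qed.

Lemma not_fano_rem (V : seq lat) (v : lat) : uniq V -> fano R V -> v \in V ->
  ~ fano R (rem v V) -> ~ origin_interior R (rem v V).
Proof.
move=> uV [Hvert [Hlat _]] vV Hnf Hint; apply: Hnf; split; [|split] => //.
- move=> w; rewrite mem_rem_uniq // => /andP[wv wV] Hw.
  apply: (Hvert w wV); move: Hw; apply: hull_sub; first exact: rem_uniq.
  move=> x; rewrite mem_rem_uniq ?rem_uniq // inE => /andP[xw].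
  rewrite mem_rem_uniq // inE => /andP[_ xV].
  by rewrite mem_rem_uniq // inE xw xV.

- move=> p Hp.
  have Hp' : in_hull V (toR R p).
    move: Hp; apply: hull_sub => // x; rewrite mem_rem_uniq //.
    by case/andP.
  case: (Hlat p Hp') => [pV|->]; last by right.
  left; rewrite mem_rem_uniq // inE pV andbT.
  apply/negP => /eqP epv; subst p.
  exact: (Hvert v vV Hp).
Qed.


End Hull3.
Arguments interior_test {R V}.
Arguments small_mult {R e}.
Arguments not_fano_rem {R V v}.

Section Core.
Variable R : realType.
Variables y1 y2 y3 y4 y5 : lat.
Hypothesis par : y2 + y4 = y3 + y5.

Local Notation V := [:: y1; y2; y3; y4; y5].
Local Notation X := (toR R).

Definition uu := y3 - y2.
Definition ww := y5 - y2.
Definition Bm : 'M[int]_3 := \matrix_(i < 3, j < 3) (nth 0 [:: y2; uu; ww] j) i 0.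

Lemma y3E : y3 = y2 + uu. Proof. by rewrite /uu addrC subrK. Qed.
Lemma y5E : y5 = y2 + ww. Proof. by rewrite /ww addrC subrK. Qed.
Lemma y4E : y4 = y2 + uu + ww.
Proof.
apply/matrixP => i j; have := congr1 (fun m : lat => m i j) par.
rewrite /uu /ww /= !mxE => h.
apply: (addrI (y2 i j)); rewrite h; ring.
Qed.

Lemma XD (p q : lat) : X (p + q) = X p + X q.
Proof. by rewrite /toR map_mxD. Qed.
Lemma XN (p : lat) : X (- p) = - X p.
Proof. by rewrite /toR map_mxN. Qed.
Lemma XZ (k : int) (p : lat) : X (k *: p) = k%:~R *: X p.
Proof. by apply/matrixP => i j; rewrite !mxE intrM. Qed.
Lemma X0 : X 0 = 0.
Proof. by apply/matrixP => i j; rewrite !mxE. Qed.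

Definition phi (v : 'rV[R]_3) (Y : 'cV[R]_3) := (v *m Y) 0 0.
Lemma phiD v Y Z : phi v (Y + Z) = phi v Y + phi v Z.
Proof. by rewrite /phi mulmxDr mxE. Qed.
Lemma phiZ v (s : R) Y : phi v (s *: Y) = s * phi v Y.
Proof. by rewrite /phi -scalemxAr mxE. Qed.

Lemma phi_col (v : 'rV[R]_3) (j : 'I_3) :
  phi v (X (nth 0 [:: y2; uu; ww] j)) = (v *m map_mx (fun z : int => (z%:~R : R)) Bm) 0 j.
Proof. by rewrite /phi !mxE; apply: eq_bigr => k _; rewrite !mxE. Qed.


Hypothesis Hint : origin_interior R V.

Lemma phi_hull (v : 'rV[R]_3) Y : in_hull V Y -> exists c1 c2 c3 c4 c5 : R,
  [/\ [/\ 0 <= c1, 0 <= c2, 0 <= c3, 0 <= c4 & 0 <= c5],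
      c1 + c2 + c3 + c4 + c5 = 1 &
      phi v Y = c1 * phi v (X y1) + c2 * phi v (X y2) + c3 * phi v (X y3)
                + c4 * phi v (X y4) + c5 * phi v (X y5)].
Proof.
move/hull5E => [c1 [c2 [c3 [c4 [c5 [h1 h2 ->]]]]]].
exists c1, c2, c3, c4, c5; split => //.
by rewrite !phiD !phiZ.
Qed.

Lemma D0_neq0 : \det Bm != 0.
Proof.
apply/negP => /eqP d0.
pose BR := map_mx (fun z : int => (z%:~R : R)) Bm.
have : \det BR == 0 by rewrite det_map_mx d0.
move/det0P => [v vn0 vB].
have p2 : phi v (X y2) = 0.
  by have := phi_col v 0; rewrite /= => ->; rewrite vB mxE.
have pu : phi v (X uu) = 0.
  by have := phi_col v 1; rewrite /= => ->; rewrite vB mxE.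
have pw : phi v (X ww) = 0.
  by have := phi_col v 2%:R; rewrite /= => ->; rewrite vB mxE.
have p3 : phi v (X y3) = 0.
  by rewrite y3E XD phiD p2 pu addr0.
have p5 : phi v (X y5) = 0 by rewrite y5E XD phiD p2 pw addr0.
have p4 : phi v (X y4) = 0.
  by have := congr1 (fun m => phi v (X m)) par; rewrite /= !XD !phiD p2 p3 p5 !add0r.
set S := phi v (v^T).
have S0 : 0 < S.
  rewrite /S /phi mxE sum3 !mxE.
  have : v != 0 := vn0.
  apply: contraNT; rewrite -leNgt => hS.
  have e0 : v 0 0 ^+ 2 + v 0 1 ^+ 2 + v 0 2%:R ^+ 2 = 0.
    apply/eqP; rewrite eq_le; apply/andP; split; rewrite ?expr2 //; nra.
  have z0 : v 0 0 = 0 by nra.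
  have z1 : v 0 1 = 0 by nra.
  have z2 : v 0 2%:R = 0 by nra.
  apply/eqP/matrixP => i j; rewrite !mxE (ord1 i).
  case: j => [[|[|[|k]]] hi] //=.
  - by rewrite -z0; congr (v _ _); apply: val_inj.
  - by rewrite -z1; congr (v _ _); apply: val_inj.
  - by rewrite -z2; congr (v _ _); apply: val_inj.
have [d dpos [hp hn]] := interior_test (v^T) Hint.
have [c1 [c2 [c3 [c4 [c5 [[h1 h2 h3 h4 h5] hs e1]]]]]] := phi_hull v _ hp.
have [c1' [c2' [c3' [c4' [c5' [[h1' h2' h3' h4' h5'] hs' e1']]]]]] := phi_hull v _ hn.
move: e1 e1'; rewrite !phiZ p2 p3 p4 p5 !mulr0 !addr0 -/S => e1 e1'.
set t := phi v (X y1) in e1 e1'.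
have A : 0 < d * S by apply: mulr_gt0.
clearbody t S; rewrite mulNr in e1'.
have [tle|tgt] := leP t 0.
  have : c1 * t <= 0 by rewrite mulr_ge0_le0. lra.
have : 0 <= c1' * t by apply: mulr_ge0 => //; exact: ltW.
lra.
Qed.


Definition D0 := \det Bm.
Definition Nm := D0 *: \adj Bm.
Definition Dz := D0 * D0.

Lemma NB : Nm *m Bm = Dz%:M.
Proof. by rewrite /Nm -scalemxAl mul_adj_mx scale_scalar_mx. Qed.
Lemma BN : Bm *m Nm = Dz%:M.
Proof. by rewrite /Nm -scalemxAr mul_mx_adj scale_scalar_mx. Qed.
Lemma Dpos : 0 < Dz.
Proof. by rewrite /Dz; have := D0_neq0; rewrite -/D0 => h; rewrite lt0r mulf_neq0 //= -expr2 sqr_ge0. Qed.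

Lemma colB (j : 'I_3) : Bm *m delta_mx j 0 = nth 0 [:: y2; uu; ww] j.
Proof. by rewrite -colE; apply/matrixP => i k; rewrite !mxE (ord1 k). Qed.

Lemma Ncol (j : 'I_3) : Nm *m nth 0 [:: y2; uu; ww] j = Dz *: delta_mx j 0.
Proof. by rewrite -colB mulmxA NB mul_scalar_mx. Qed.

Definition cz (k : 'I_3) (y : lat) := (Nm *m y) k 0.
Lemma czD k p q : cz k (p + q) = cz k p + cz k q.
Proof. by rewrite /cz mulmxDr mxE. Qed.
Lemma czN k p : cz k (- p) = - cz k p.
Proof. by rewrite /cz mulmxN mxE. Qed.
Lemma czZ k (m : int) p : cz k (m *: p) = m * cz k p.
Proof. by rewrite /cz -scalemxAr mxE. Qed.

Lemma cz_col (k j : 'I_3) : cz k (nth 0 [:: y2; uu; ww] j) = if k == j then Dz else 0.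
Proof. rewrite /cz Ncol !mxE eqxx andbT; case: eqP => _; by rewrite ?mulr1 ?mulr0. Qed.

Lemma cz_y2 : [/\ cz 0 y2 = Dz, cz 1 y2 = 0 & cz 2%:R y2 = 0].
Proof. by split; rewrite (cz_col _ 0). Qed.
Lemma cz_uu : [/\ cz 0 uu = 0, cz 1 uu = Dz & cz 2%:R uu = 0].
Proof. by split; rewrite (cz_col _ 1). Qed.
Lemma cz_ww : [/\ cz 0 ww = 0, cz 1 ww = 0 & cz 2%:R ww = Dz].
Proof. by split; rewrite (cz_col _ 2%:R). Qed.

Definition kap (k : 'I_3) (Y : 'cV[R]_3) := (map_mx (fun z : int => (z%:~R : R)) Nm *m Y) k 0.
Lemma kapD k Y Z : kap k (Y + Z) = kap k Y + kap k Z.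
Proof. by rewrite /kap mulmxDr mxE. Qed.
Lemma kapZ k (s : R) Y : kap k (s *: Y) = s * kap k Y.
Proof. by rewrite /kap -scalemxAr mxE. Qed.
Lemma kapX k y : kap k (X y) = (cz k y)%:~R.
Proof. by rewrite /kap /cz /toR -map_mxM mxE. Qed.

Lemma kap_inj Y Z : (forall k, kap k Y = kap k Z) -> Y = Z.
Proof.
move=> h.
have e : map_mx (fun z : int => (z%:~R : R)) Nm *m Y = map_mx (fun z : int => (z%:~R : R)) Nm *m Z.
  by apply/matrixP => i j; rewrite (ord1 j); apply: h.
have := congr1 (mulmx (map_mx (fun z : int => (z%:~R : R)) Bm)) e.
rewrite !mulmxA -map_mxM BN.
have -> : map_mx (fun z : int => (z%:~R : R)) (Dz%:M : 'M_3) = ((Dz%:~R : R)%:M : 'M_3).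
  by apply/matrixP => i j; rewrite !mxE; case: (i == j); rewrite ?mulr1n ?mulr0n.
rewrite !mul_scalar_mx; apply: scalerI.
by rewrite intr_eq0 gt_eqF // Dpos.
Qed.


Lemma cz_y3 : [/\ cz 0 y3 = Dz, cz 1 y3 = Dz & cz 2%:R y3 = 0].
Proof.
have [a1 a2 a3] := cz_y2; have [b1 b2 b3] := cz_uu.
by rewrite y3E; split; rewrite czD ?a1 ?a2 ?a3 ?b1 ?b2 ?b3 ?addr0 ?add0r.
Qed.
Lemma cz_y5 : [/\ cz 0 y5 = Dz, cz 1 y5 = 0 & cz 2%:R y5 = Dz].
Proof.
have [a1 a2 a3] := cz_y2; have [b1 b2 b3] := cz_ww.
by rewrite y5E; split; rewrite czD ?a1 ?a2 ?a3 ?b1 ?b2 ?b3 ?addr0 ?add0r.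
Qed.
Lemma cz_y4 : [/\ cz 0 y4 = Dz, cz 1 y4 = Dz & cz 2%:R y4 = Dz].
Proof.
have [a1 a2 a3] := cz_y2; have [b1 b2 b3] := cz_uu; have [c1 c2 c3] := cz_ww.
by rewrite y4E; split; rewrite czD czD ?a1 ?a2 ?a3 ?b1 ?b2 ?b3 ?c1 ?c2 ?c3 ?addr0 ?add0r.
Qed.

Definition ca := cz 0 y1.
Definition cb := cz 1 y1.
Definition cc := cz 2%:R y1.

Local Notation "x %:r" := (x%:~R : R) (at level 2, format "x %:r").

Lemma hullC Y : in_hull V Y -> exists c1 c2 c3 c4 c5 : R,
  [/\ [/\ 0 <= c1, 0 <= c2, 0 <= c3, 0 <= c4 & 0 <= c5],
      c1 + c2 + c3 + c4 + c5 = 1,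
      kap 0 Y = c1 * ca%:r + (c2 + c3 + c4 + c5) * Dz%:r,
      kap 1 Y = c1 * cb%:r + (c3 + c4) * Dz%:r &
      kap 2%:R Y = c1 * cc%:r + (c4 + c5) * Dz%:r].
Proof.
move/hull5E => [c1 [c2 [c3 [c4 [c5 [h1 h2 ->]]]]]].
exists c1, c2, c3, c4, c5.
have [a1 a2 a3] := cz_y2; have [b1 b2 b3] := cz_y3.
have [d1 d2 d3] := cz_y4; have [e1 e2 e3] := cz_y5.
split => //; rewrite !kapD !kapZ !kapX ?a1 ?a2 ?a3 ?b1 ?b2 ?b3 ?d1 ?d2 ?d3 ?e1 ?e2 ?e3 /ca /cb /cc; ring.
Qed.

Lemma hullC_inv Y (c1 c2 c3 c4 c5 : R) :
  [/\ 0 <= c1, 0 <= c2, 0 <= c3, 0 <= c4 & 0 <= c5] ->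
  c1 + c2 + c3 + c4 + c5 = 1 ->
  kap 0 Y = c1 * ca%:r + (c2 + c3 + c4 + c5) * Dz%:r ->
  kap 1 Y = c1 * cb%:r + (c3 + c4) * Dz%:r ->
  kap 2%:R Y = c1 * cc%:r + (c4 + c5) * Dz%:r -> in_hull V Y.
Proof.
move=> h hs k0 k1 k2; apply/hull5E; exists c1, c2, c3, c4, c5; split => //.
have [a1 a2 a3] := cz_y2; have [b1 b2 b3] := cz_y3.
have [d1 d2 d3] := cz_y4; have [e1 e2 e3] := cz_y5.
apply: kap_inj => k; rewrite !kapD !kapZ !kapX.
case: k => [[|[|[|?]]] hk] //.
- have -> : Ordinal hk = 0 by apply: val_inj.
  rewrite k0 a1 b1 d1 e1 /ca; ring.
- have -> : Ordinal hk = 1 by apply: val_inj.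
  rewrite k1 a2 b2 d2 e2 /cb; ring.
- have -> : Ordinal hk = 2%:R by apply: val_inj.
  rewrite k2 a3 b3 d3 e3 /cc; ring.
Qed.


Lemma test_neg (Z : 'cV[R]_3) : exists2 d : R, 0 < d & exists c1 c2 c3 c4 c5 : R,
  [/\ [/\ 0 <= c1, 0 <= c2, 0 <= c3, 0 <= c4 & 0 <= c5],
      c1 + c2 + c3 + c4 + c5 = 1,
      - d * kap 0 Z = c1 * ca%:r + (c2 + c3 + c4 + c5) * Dz%:r,
      - d * kap 1 Z = c1 * cb%:r + (c3 + c4) * Dz%:r &
      - d * kap 2%:R Z = c1 * cc%:r + (c4 + c5) * Dz%:r].
Proof.
have [d d0 [_ hn]] := interior_test Z Hint.
exists d => //; have := hullC _ hn; by rewrite !kapZ.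
Qed.

Lemma DR0 : 0 < Dz%:r.
Proof. by rewrite ltr0z Dpos. Qed.

Ltac nnl h1 h2 h3 h4 h5 :=
  have := mulr_ge0 h1 (ltW DR0); have := mulr_ge0 h2 (ltW DR0);
  have := mulr_ge0 h3 (ltW DR0); have := mulr_ge0 h4 (ltW DR0);
  have := mulr_ge0 h5 (ltW DR0).

Lemma ca_neg : ca < 0.
Proof.
rewrite ltNge; apply/negP => ha.
have ha' : 0 <= ca%:r by rewrite ler0z.
have [d d0 [c1 [c2 [c3 [c4 [c5 [[h1 h2 h3 h4 h5] hs e0 _ _]]]]]]] := test_neg (X y2).
have [a1 _ _] := cz_y2.
rewrite kapX a1 in e0.
have := mulr_ge0 h1 ha'; have := DR0; have := mulr_gt0 d0 DR0; nnl h1 h2 h3 h4 h5; lra.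
Qed.

Lemma cb_neg : cb < 0.
Proof.
rewrite ltNge; apply/negP => ha.
have ha' : 0 <= cb%:r by rewrite ler0z.
have [d d0 [c1 [c2 [c3 [c4 [c5 [[h1 h2 h3 h4 h5] hs _ e0 _]]]]]]] := test_neg (X uu).
have [_ a1 _] := cz_uu.
rewrite kapX a1 in e0.
have := mulr_ge0 h1 ha'; have := DR0; have := mulr_gt0 d0 DR0; nnl h1 h2 h3 h4 h5; lra.
Qed.

Lemma cc_neg : cc < 0.
Proof.
rewrite ltNge; apply/negP => ha.
have ha' : 0 <= cc%:r by rewrite ler0z.
have [d d0 [c1 [c2 [c3 [c4 [c5 [[h1 h2 h3 h4 h5] hs _ _ e0]]]]]]] := test_neg (X ww).
have [_ _ a1] := cz_ww.
rewrite kapX a1 in e0.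
have := mulr_ge0 h1 ha'; have := DR0; have := mulr_gt0 d0 DR0; nnl h1 h2 h3 h4 h5; lra.
Qed.

Lemma cb_gt : ca < cb.
Proof.
rewrite ltNge; apply/negP => ha.
have ha' : 0 <= ca%:r - cb%:r by rewrite subr_ge0 ler_int.
have [d d0 [c1 [c2 [c3 [c4 [c5 [[h1 h2 h3 h4 h5] hs e0 e1 _]]]]]]] := test_neg (X y2 - X uu).
have [a1 a2 _] := cz_y2; have [b1 b2 _] := cz_uu.
rewrite kapD kapD -!XN !kapX !czN a1 a2 b1 b2 in e0 e1.
rewrite !intrN in e0 e1.
have := mulr_ge0 h1 ha'; have := DR0; have := mulr_gt0 d0 DR0; nnl h1 h2 h3 h4 h5; lra.
Qed.

Lemma cc_gt : ca < cc.
Proof.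
rewrite ltNge; apply/negP => ha.
have ha' : 0 <= ca%:r - cc%:r by rewrite subr_ge0 ler_int.
have [d d0 [c1 [c2 [c3 [c4 [c5 [[h1 h2 h3 h4 h5] hs e0 _ e2]]]]]]] := test_neg (X y2 - X ww).
have [a1 _ a3] := cz_y2; have [b1 _ b3] := cz_ww.
rewrite kapD kapD -!XN !kapX !czN a1 a3 b1 b3 in e0 e2.
rewrite !intrN in e0 e2.
have := mulr_ge0 h1 ha'; have := DR0; have := mulr_gt0 d0 DR0; nnl h1 h2 h3 h4 h5; lra.
Qed.


Definition Nb (k : 'I_3) : R := \sum_(j < 3) `|Nm k j|%:r.

Lemma Nb_ge0 k : 0 <= Nb k.
Proof. by apply: sumr_ge0 => j _; rewrite intr_norm normr_ge0. Qed.

Lemma abs_lt (x e : R) : 0 < e -> x ^+ 2 < e ^+ 2 -> `|x| < e.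
Proof.
move=> e0 h; rewrite ltr_norml; apply/andP; split; rewrite ltNge; apply/negP => h';
  rewrite !expr2 in h; nra.
Qed.

Lemma kap_bound (Y : 'cV[R]_3) e : 0 < e -> \sum_(i < 3) Y i 0 ^+ 2 < e ^+ 2 ->
  forall k, `|kap k Y| <= Nb k * e.
Proof.
move=> e0 hs k.
have hY : forall j : 'I_3, `|Y j 0| < e.
  move=> j; apply: abs_lt => //; apply: le_lt_trans hs.
  rewrite (bigD1 j) //= lerDl; apply: sumr_ge0 => i _; exact: sqr_ge0.
rewrite /kap mxE /Nb mulr_suml.
apply: le_trans (ler_norm_sum _ _ _) _.
apply: ler_sum => j _; rewrite mxE normrM -intr_norm.
apply: ler_wpM2l; first by rewrite intr_norm normr_ge0.
exact: ltW.
Qed.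

Lemma interior_from (W : seq lat) : (exists2 eps : R, 0 < eps &
    forall Y, (forall k, `|kap k Y| <= eps) -> in_hull W Y) -> origin_interior R W.
Proof.
move=> [eps e0 H].
set G := 1 + Nb 0 + Nb 1 + Nb 2%:R.
have hN0 := Nb_ge0 0; have hN1 := Nb_ge0 1; have hN2 := Nb_ge0 2%:R.
have G0 : 0 < G by rewrite /G; lra.
exists (eps / G); split; first exact: divr_gt0.
move=> Y hY; apply: H => k.
apply: le_trans (kap_bound _ _ (divr_gt0 e0 G0) hY k) _.
have hk : Nb k <= G.
  have : Nb k <= Nb 0 + Nb 1 + Nb 2%:R.
    case: k => [[|[|[|?]]] hk] //.
    - have -> : Ordinal hk = 0 by apply: val_inj. lra.
    - have -> : Ordinal hk = 1 by apply: val_inj. lra.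
    - have -> : Ordinal hk = 2%:R by apply: val_inj. lra.
  rewrite /G; lra.
apply: le_trans (ler_wpM2r (ltW (divr_gt0 e0 G0)) hk) _.
by rewrite mulrC divfK ?gt_eqF.
Qed.

Lemma affine_pos (f : R -> R -> R -> R) :
  (forall p0 p1 p2, f p0 p1 p2 = f 0 0 0 + p0 * (f 1 0 0 - f 0 0 0)
      + p1 * (f 0 1 0 - f 0 0 0) + p2 * (f 0 0 1 - f 0 0 0)) ->
  0 < f 0 0 0 ->
  exists2 eps : R, 0 < eps & forall p0 p1 p2,
    `|p0| <= eps -> `|p1| <= eps -> `|p2| <= eps -> 0 <= f p0 p1 p2.
Proof.
move=> Hf f0.
set g0 := f 1 0 0 - f 0 0 0; set g1 := f 0 1 0 - f 0 0 0; set g2 := f 0 0 1 - f 0 0 0.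
set G := 1 + `|g0| + `|g1| + `|g2|.
have G0 : 0 < G by rewrite /G; have := normr_ge0 g0; have := normr_ge0 g1; have := normr_ge0 g2; lra.
exists (f 0 0 0 / G); first exact: divr_gt0.
move=> p0 p1 p2 h0 h1 h2; rewrite Hf -/g0 -/g1 -/g2.
have bnd : forall p g, `|p| <= f 0 0 0 / G -> - (f 0 0 0 / G * `|g|) <= p * g.
  move=> p g hp.
  have : `|p * g| <= f 0 0 0 / G * `|g| by rewrite normrM ler_wpM2r.
  by rewrite ler_norml => /andP[].
have b0 := bnd _ g0 h0; have b1 := bnd _ g1 h1; have b2 := bnd _ g2 h2.
have : f 0 0 0 / G * (`|g0| + `|g1| + `|g2|) <= f 0 0 0.
  rewrite mulrAC ler_pdivrMr // ler_pM2l //; rewrite /G; lra.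
move=> h; rewrite !mulrDr in h; clearbody g0 g1 g2; lra.
Qed.

Definition Aff (f : R -> R -> R -> R) :=
  (forall p0 p1 p2, f p0 p1 p2 = f 0 0 0 + p0 * (f 1 0 0 - f 0 0 0)
      + p1 * (f 0 1 0 - f 0 0 0) + p2 * (f 0 0 1 - f 0 0 0)) /\ 0 < f 0 0 0.

Lemma ord3_cases (P : 'I_3 -> Prop) : P 0 -> P 1 -> P 2%:R -> forall k, P k.
Proof.
move=> h0 h1 h2 [[|[|[|?]]] hk] //.
- by have -> : Ordinal hk = 0 by apply: val_inj.
- by have -> : Ordinal hk = 1 by apply: val_inj.
- by have -> : Ordinal hk = 2%:R by apply: val_inj.
Qed.

Lemma tetra_interior (t1 t2 t3 t4 : lat) (f1 f2 f3 f4 : R -> R -> R -> R) :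
  Aff f1 -> Aff f2 -> Aff f3 -> Aff f4 ->
  (forall p0 p1 p2, f1 p0 p1 p2 + f2 p0 p1 p2 + f3 p0 p1 p2 + f4 p0 p1 p2 = 1) ->
  (forall p0 p1 p2, [/\
      p0 = f1 p0 p1 p2 * (cz 0 t1)%:r + f2 p0 p1 p2 * (cz 0 t2)%:r
      + f3 p0 p1 p2 * (cz 0 t3)%:r + f4 p0 p1 p2 * (cz 0 t4)%:r,
      p1 = f1 p0 p1 p2 * (cz 1 t1)%:r + f2 p0 p1 p2 * (cz 1 t2)%:r
      + f3 p0 p1 p2 * (cz 1 t3)%:r + f4 p0 p1 p2 * (cz 1 t4)%:r &
      p2 = f1 p0 p1 p2 * (cz 2%:R t1)%:r + f2 p0 p1 p2 * (cz 2%:R t2)%:r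
      + f3 p0 p1 p2 * (cz 2%:R t3)%:r + f4 p0 p1 p2 * (cz 2%:R t4)%:r]) ->
  origin_interior R [:: t1; t2; t3; t4].
Proof.
move=> [A1 P1] [A2 P2] [A3 P3] [A4 P4] Hs Hc.
have [e1 e1p E1] := affine_pos _ A1 P1.
have [e2 e2p E2] := affine_pos _ A2 P2.
have [e3 e3p E3] := affine_pos _ A3 P3.
have [e4 e4p E4] := affine_pos _ A4 P4.
apply: interior_from.
exists (Order.min (Order.min e1 e2) (Order.min e3 e4)).
  by rewrite !lt_min e1p e2p e3p e4p.
move=> Y hY.
have hY0 := hY 0; have hY1 := hY 1; have hY2 := hY 2%:R.
rewrite !le_min in hY0 hY1 hY2.
case/andP: hY0 => /andP[a01 a02] /andP[a03 a04].
case/andP: hY1 => /andP[a11 a12] /andP[a13 a14].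
case/andP: hY2 => /andP[a21 a22] /andP[a23 a24].
apply/hull4E.
exists (f1 (kap 0 Y) (kap 1 Y) (kap 2%:R Y)), (f2 (kap 0 Y) (kap 1 Y) (kap 2%:R Y)),
       (f3 (kap 0 Y) (kap 1 Y) (kap 2%:R Y)), (f4 (kap 0 Y) (kap 1 Y) (kap 2%:R Y)).
split.
- split; [exact: E1|exact: E2|exact: E3|exact: E4].
- exact: Hs.
- have [c0 c1 c2] := Hc (kap 0 Y) (kap 1 Y) (kap 2%:R Y).
  apply: kap_inj; apply: ord3_cases; rewrite !kapD !kapZ !kapX //.
Qed.


Hypothesis Hm2 : ~ origin_interior R [:: y1; y3; y4; y5].
Hypothesis Hm3 : ~ origin_interior R [:: y1; y2; y4; y5].
Hypothesis Hm4 : ~ origin_interior R [:: y1; y2; y3; y5].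
Hypothesis Hm5 : ~ origin_interior R [:: y1; y2; y3; y4].

Lemma ineqs : [/\ ca%:r < 0 :> R, cb%:r < 0 :> R, cc%:r < 0 :> R, ca%:r < cb%:r :> R & ca%:r < cc%:r :> R].
Proof.
by split; rewrite ?ltr_int ?ltrz0 ?ca_neg ?cb_neg ?cc_neg ?cb_gt ?cc_gt.
Qed.

Lemma DA0 : 0 < Dz%:r - ca%:r :> R.
Proof. have := DR0; have [h _ _ _ _] := ineqs; lra. Qed.

Definition g1 (p0 p1 p2 : R) := (Dz%:r - p0) / (Dz%:r - ca%:r).

Lemma Aff_g1 : Aff g1.
Proof.
have := DA0; have := DR0 => h1 h2.
split; first by move=> p0 p1 p2; rewrite /g1; field; rewrite gt_eqF.
by rewrite /g1 subr0; apply: divr_gt0.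
Qed.

Ltac affp num := split;
  [ by move=> p0 p1 p2; rewrite /g1; field; rewrite !gt_eqF ?DR0 ?DA0 //
  | rewrite /=; match goal with |- is_true (@Order.lt _ _ _ ?E) =>
      have -> : E = num / (Dz%:r - ca%:r) by rewrite /g1; field; rewrite !gt_eqF ?DR0 ?DA0 // end ];
  apply: divr_gt0; [|exact: DA0].

Lemma drop2 : ~ (cb + cc < ca).
Proof.
move=> H.
have H' : cb%:r + cc%:r < ca%:r :> R by rewrite -intrD ltr_int.
have [i1 i2 i3 i4 i5] := ineqs.
apply: Hm2.
apply: (@tetra_interior _ _ _ _ g1
   (fun p0 p1 p2 => 1 - g1 p0 p1 p2 - (p2 - g1 p0 p1 p2 * cc%:r) / Dz%:r)
   (fun p0 p1 p2 => (p1 - g1 p0 p1 p2 * cb%:r) / Dz%:r + (p2 - g1 p0 p1 p2 * cc%:r) / Dz%:r - (1 - g1 p0 p1 p2))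
   (fun p0 p1 p2 => 1 - g1 p0 p1 p2 - (p1 - g1 p0 p1 p2 * cb%:r) / Dz%:r)).
- exact: Aff_g1.
- affp (cc%:r - ca%:r); lra.
- affp (ca%:r - cb%:r - cc%:r); lra.
- affp (cb%:r - ca%:r); lra.
- by move=> p0 p1 p2; field; rewrite gt_eqF ?DR0.
- move=> p0 p1 p2.
  have [a1 a2 a3] := cz_y3; have [b1 b2 b3] := cz_y4; have [c1 c2 c3] := cz_y5.
  rewrite a1 a2 a3 b1 b2 b3 c1 c2 c3 -/ca -/cb -/cc.
  split; rewrite /g1; field; rewrite !gt_eqF ?DR0 ?DA0 //.
Qed.


Lemma drop4 : ~ (ca < cb + cc).
Proof.
move=> H.
have H' : ca%:r < cb%:r + cc%:r :> R by rewrite -intrD ltr_int.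
have [i1 i2 i3 i4 i5] := ineqs.
apply: Hm4.
apply: (@tetra_interior _ _ _ _ g1
   (fun p0 p1 p2 => 1 - g1 p0 p1 p2 - (p1 - g1 p0 p1 p2 * cb%:r) / Dz%:r - (p2 - g1 p0 p1 p2 * cc%:r) / Dz%:r)
   (fun p0 p1 p2 => (p1 - g1 p0 p1 p2 * cb%:r) / Dz%:r)
   (fun p0 p1 p2 => (p2 - g1 p0 p1 p2 * cc%:r) / Dz%:r)).
- exact: Aff_g1.
- affp (cb%:r + cc%:r - ca%:r); lra.
- affp (- cb%:r); lra.
- affp (- cc%:r); lra.
- by move=> p0 p1 p2; field; rewrite gt_eqF ?DR0.
- move=> p0 p1 p2.
  have [a1 a2 a3] := cz_y2; have [b1 b2 b3] := cz_y3; have [c1 c2 c3] := cz_y5.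
  rewrite a1 a2 a3 b1 b2 b3 c1 c2 c3 -/ca -/cb -/cc.
  split; rewrite /g1; field; rewrite !gt_eqF ?DR0 ?DA0 //.
Qed.

Lemma drop3 : ~ (cc < cb).
Proof.
move=> H.
have H' : cc%:r < cb%:r :> R by rewrite ltr_int.
have [i1 i2 i3 i4 i5] := ineqs.
apply: Hm3.
apply: (@tetra_interior _ _ _ _ g1
   (fun p0 p1 p2 => 1 - g1 p0 p1 p2 - (p2 - g1 p0 p1 p2 * cc%:r) / Dz%:r)
   (fun p0 p1 p2 => (p1 - g1 p0 p1 p2 * cb%:r) / Dz%:r)
   (fun p0 p1 p2 => (p2 - g1 p0 p1 p2 * cc%:r) / Dz%:r - (p1 - g1 p0 p1 p2 * cb%:r) / Dz%:r)).
- exact: Aff_g1.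
- affp (cc%:r - ca%:r); lra.
- affp (- cb%:r); lra.
- affp (cb%:r - cc%:r); lra.
- by move=> p0 p1 p2; field; rewrite gt_eqF ?DR0.
- move=> p0 p1 p2.
  have [a1 a2 a3] := cz_y2; have [b1 b2 b3] := cz_y4; have [c1 c2 c3] := cz_y5.
  rewrite a1 a2 a3 b1 b2 b3 c1 c2 c3 -/ca -/cb -/cc.
  split; rewrite /g1; field; rewrite !gt_eqF ?DR0 ?DA0 //.
Qed.

Lemma drop5 : ~ (cb < cc).
Proof.
move=> H.
have H' : cb%:r < cc%:r :> R by rewrite ltr_int.
have [i1 i2 i3 i4 i5] := ineqs.
apply: Hm5.
apply: (@tetra_interior _ _ _ _ g1
   (fun p0 p1 p2 => 1 - g1 p0 p1 p2 - (p1 - g1 p0 p1 p2 * cb%:r) / Dz%:r)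
   (fun p0 p1 p2 => (p1 - g1 p0 p1 p2 * cb%:r) / Dz%:r - (p2 - g1 p0 p1 p2 * cc%:r) / Dz%:r)
   (fun p0 p1 p2 => (p2 - g1 p0 p1 p2 * cc%:r) / Dz%:r)).
- exact: Aff_g1.
- affp (cb%:r - ca%:r); lra.
- affp (cc%:r - cb%:r); lra.
- affp (- cc%:r); lra.
- by move=> p0 p1 p2; field; rewrite gt_eqF ?DR0.
- move=> p0 p1 p2.
  have [a1 a2 a3] := cz_y2; have [b1 b2 b3] := cz_y3; have [c1 c2 c3] := cz_y4.
  rewrite a1 a2 a3 b1 b2 b3 c1 c2 c3 -/ca -/cb -/cc.
  split; rewrite /g1; field; rewrite !gt_eqF ?DR0 ?DA0 //.
Qed.

Lemma center : cb = cc /\ ca = cb + cc.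
Proof.
have h1 := drop2; have h2 := drop4; have h3 := drop3; have h4 := drop5.
split; lia.
Qed.


Hypothesis Hlat : forall p : lat, in_hull V (X p) -> p \in V \/ p = 0.

Lemma cz_inj (p q : lat) : (forall k, cz k p = cz k q) -> p = q.
Proof.
move=> h.
have : X p = X q by apply: kap_inj => k; rewrite !kapX h.
move/matrixP => e; apply/matrixP => i j; have := e i j; rewrite !mxE.
exact: intr_inj.
Qed.

Lemma gcdz_ge0' (m n : int) : 0 <= gcdz m n.
Proof. by rewrite /gcdz. Qed.

Lemma inV_cases (p : lat) : p \in V ->
  p = y1 \/ p = y2 \/ p = y3 \/ p = y4 \/ p = y5.
Proof.
rewrite !inE; case/orP => [/eqP->|]; first by left.
case/orP => [/eqP->|]; first by right; left.
case/orP => [/eqP->|]; first by right; right; left.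
case/orP => [/eqP->|/eqP->]; first by right; right; right; left.
by right; right; right; right.
Qed.

Lemma cz0 k : cz k 0 = 0.
Proof. by rewrite /cz mulmx0 mxE. Qed.

Lemma b_eq : cb = - Dz.
Proof.
have [ecc eca] := center.
set m := - cb.
have m0 : 0 < m by rewrite /m oppr_gt0 cb_neg.
have n0 := Dpos.
have [u [v Hb]] := Bezoutz m Dz.
set g := gcdz m Dz in Hb.
have g0 : 0 < g.
  rewrite lt0r gcdz_ge0' andbT gcdz_eq0; apply/negP => /andP[/eqP h _].
  by move: m0; rewrite h.
have [l hl] := dvdzP (dvdz_gcdl m Dz).
have [mm hmm] := dvdzP (dvdz_gcdr m Dz).
rewrite -/g in hl hmm.
have l0 : 0 < l by rewrite -(pmulr_lgt0 _ g0) -hl.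
have mm0 : 0 < mm by rewrite -(pmulr_lgt0 _ g0) -hmm.
set s0 := (- u) *: y1 + v *: (y2 + y4).
have [a1 a2 a3] := cz_y2; have [b1 b2 b3] := cz_y3; have [c1 c2 c3] := cz_y4; have [d1 d2 d3] := cz_y5.
have cb_e : cb = - (l * g) by rewrite -[cb]opprK -/m hl.
have ca_e : ca = - (2 * l * g) by rewrite eca -ecc cb_e; ring.
have cc_e : cc = - (l * g) by rewrite -ecc.
have D_e : Dz = mm * g by [].
have s00 : cz 0 s0 = 2 * g.
  rewrite /s0 czD !czZ czD a1 c1 -/ca -Hb /m; rewrite eca -ecc; ring.
have s01 : cz 1 s0 = g.
  rewrite /s0 czD !czZ czD a2 c2 -/cb -Hb /m; ring.
have s02 : cz 2%:R s0 = g.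
  rewrite /s0 czD !czZ czD a3 c3 -/cc -Hb /m; rewrite -ecc; ring.
have mm1 : mm = 1.
  have [mm2|mm2] := ltP 1 mm; last by lia.
  exfalso; have mm2' : 2 <= mm by lia.
  have Lr : 0 < l%:r :> R by rewrite ltr0z.
  have Mr : 2 <= mm%:r :> R by rewrite (ler_int R 2 mm).
  have Gr : 0 < g%:r :> R by rewrite ltr0z.
  have den : 2 * l%:r + mm%:r != 0 :> R by rewrite gt_eqF //; lra.
  have hs : in_hull V (X s0).
    apply: (@hullC_inv _ ((mm%:r - 2) / (2 * l%:r + mm%:r)) ((l%:r + 1) / (2 * l%:r + mm%:r)) 0
                 ((l%:r + 1) / (2 * l%:r + mm%:r)) 0).
    - split => //; apply: divr_ge0; lra.
    - by field.
    - rewrite !kapX s00 ca_e D_e !(intrM, intrN); by field.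
    - rewrite !kapX s01 cb_e D_e !(intrM, intrN); by field.
    - rewrite !kapX s02 cc_e D_e !(intrM, intrN); by field.
  case: (Hlat _ hs) => [/inV_cases|].
    case=> [e|[e|[e|[e|e]]]]; have := s01; rewrite e ?d2 ?c2 ?b2 ?a2 -?/cb => h.
    - move: g0; rewrite -h cb_e; lia.
    - by move: g0; rewrite -h ltxx.
    - have := mm2; have := g0; rewrite -h D_e; nia.
    - have := mm2; have := g0; rewrite -h D_e; nia.
    - by move: g0; rewrite -h ltxx.
  by move=> e; move: s01; rewrite e cz0 => h; move: g0; rewrite -h ltxx.
have l1 : l = 1.
  have Lr : 1 <= l%:r :> R by rewrite (ler_int R 1 l).
  have Gr : 0 < g%:r :> R by rewrite ltr0z.
  have den : 2 * l%:r + mm%:r != 0 :> R by rewrite mm1 gt_eqF //; lra.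
  have hs : in_hull V (X (- s0)).
    apply: (@hullC_inv _ ((mm%:r + 2) / (2 * l%:r + mm%:r)) ((l%:r - 1) / (2 * l%:r + mm%:r)) 0
                 ((l%:r - 1) / (2 * l%:r + mm%:r)) 0).
    - rewrite mm1; split => //; apply: divr_ge0; lra.
    - by field.
    - rewrite (kapX 0 (- s0)) czN s00 ca_e D_e !(intrM, intrN); by field.
    - rewrite (kapX 1 (- s0)) czN s01 cb_e D_e !(intrM, intrN); by field.
    - rewrite (kapX 2%:R (- s0)) czN s02 cc_e D_e !(intrM, intrN); by field.
  case: (Hlat _ hs) => [/inV_cases|].
    case=> [e|[e|[e|[e|e]]]]; have := s01; have := s00; rewrite -(opprK s0) e !czN ?d2 ?c2 ?b2 ?a2 ?d1 ?c1 ?b1 ?a1 -?/cb -?/ca => h0 h.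
    - move: h; rewrite cb_e opprK => h; nia.
    - by move: g0; rewrite -h oppr0 ltxx.
    - move: g0 n0; rewrite -h; lia.
    - move: g0 n0; rewrite -h; lia.
    - by move: g0; rewrite -h oppr0 ltxx.
  by move=> e; move: s01; rewrite -(opprK s0) e oppr0 cz0 => h; move: g0; rewrite -h ltxx.
by rewrite cb_e D_e l1 mm1.
Qed.


Lemma coords1 : [/\ ca = - (2 * Dz), cb = - Dz & cc = - Dz].
Proof.
have [ecc eca] := center; have hb := b_eq.
by split; rewrite ?eca -?ecc hb //; ring.
Qed.

Lemma y1E : y1 = - (y2 + y4).
Proof.
have [e0 e1 e2] := coords1.
have [a1 a2 a3] := cz_y2; have [c1 c2 c3] := cz_y4.
apply: cz_inj; apply: ord3_cases; rewrite czN czD.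
- by rewrite a1 c1 -/ca e0; ring.
- by rewrite a2 c2 -/cb e1; ring.
- by rewrite a3 c3 -/cc e2; ring.
Qed.

Lemma vert_div (z : lat) : z \in V \/ z = 0 -> forall k, exists t : int, cz k z = t * Dz.
Proof.
have [e0 e1 e2] := coords1.
have [a1 a2 a3] := cz_y2; have [b1 b2 b3] := cz_y3.
have [c1 c2 c3] := cz_y4; have [d1 d2 d3] := cz_y5.
case=> [/inV_cases [->|[->|[->|[->|->]]]]|->]; apply: ord3_cases.
all: first [ by exists 0; rewrite ?cz0 ?a1 ?a2 ?a3 ?b1 ?b2 ?b3 ?c1 ?c2 ?c3 ?d1 ?d2 ?d3 mul0r
            | by exists 1; rewrite ?a1 ?a2 ?a3 ?b1 ?b2 ?b3 ?c1 ?c2 ?c3 ?d1 ?d2 ?d3 mul1r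
            | by exists (-1); rewrite -/cb -/cc ?e1 ?e2 mulN1r
            | by exists (-2); rewrite -/ca e0 mulNr ].
Qed.

Lemma inP_hull (z : lat) :
  inP ((cz 0 z)%:r / Dz%:r) ((cz 1 z)%:r / Dz%:r) ((cz 2%:R z)%:r / Dz%:r) ->
  in_hull V (X z).
Proof.
have [e0 e1 e2] := coords1.
have Dn : Dz%:r != 0 :> R by rewrite gt_eqF // DR0.
set q0 := (cz 0 z)%:r / Dz%:r; set q1 := (cz 1 z)%:r / Dz%:r; set q2 := (cz 2%:R z)%:r / Dz%:r.
have r0 : (cz 0 z)%:r = q0 * Dz%:r by rewrite /q0 divfK.
have r1 : (cz 1 z)%:r = q1 * Dz%:r by rewrite /q1 divfK.
have r2 : (cz 2%:R z)%:r = q2 * Dz%:r by rewrite /q2 divfK.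
clearbody q0 q1 q2.
move=> [h1 h2 h3 h4 h5].
have [hle|hlt] := leP q2 q1.
  apply: (@hullC_inv _ ((1 - q0) / 3) ((1 + 2 * q0) / 3 - q1) (q1 - q2) (q2 + (1 - q0) / 3) 0).
  - split => //; lra.
  - lra.
  - rewrite kapX r0 -/ca e0 intrN (intrM _ 2 Dz); lra.
  - rewrite kapX r1 -/cb e1 intrN; lra.
  - rewrite kapX r2 -/cc e2 intrN; lra.
apply: (@hullC_inv _ ((1 - q0) / 3) ((1 + 2 * q0) / 3 - q2) 0 (q1 + (1 - q0) / 3) (q2 - q1)).
- split => //; lra.
- lra.
- rewrite kapX r0 -/ca e0 intrN (intrM _ 2 Dz); lra.
- rewrite kapX r1 -/cb e1 intrN; lra.
- rewrite kapX r2 -/cc e2 intrN; lra.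
Qed.


Lemma isZ_div (m : int) : isZ ((m%:r) / Dz%:r) -> (Dz %| m)%Z.
Proof.
have Dn : Dz%:r != 0 :> R by rewrite gt_eqF // DR0.
move=> [t ht]; apply/dvdzP; exists t.
apply: (@intr_inj R); rewrite intrM -ht divfK //.
Qed.

Lemma div_isZ (m t : int) : m = t * Dz -> isZ ((m%:r) / Dz%:r).
Proof.
have Dn : Dz%:r != 0 :> R by rewrite gt_eqF // DR0.
by move=> ->; exists t; rewrite intrM mulfK.
Qed.

Lemma index_div (y : lat) k : (Dz %| cz k y)%Z.
Proof.
have Dn : Dz%:r != 0 :> R by rewrite gt_eqF // DR0.
suff H : [&& (Dz %| cz 0%R y)%Z, (Dz %| cz 1%R y)%Z & (Dz %| cz (2%:R)%R y)%Z].
  by case/and3P: H => h0 h1 h2; move: k; apply: ord3_cases.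
case H: [&& _, _ & _] => //; exfalso.
have nZ : ~ (isZ ((cz 0 y)%:r / Dz%:r) /\ isZ ((cz 1 y)%:r / Dz%:r) /\ isZ ((cz 2%:R y)%:r / Dz%:r)).
  move=> [h0 [h1 h2]]; move: H; by rewrite !isZ_div.
have [k' [i [j [l [hP hZ]]]]] := covering nZ.
set z := k' *: y + i *: y2 + j *: uu + l *: ww.
have [a1 a2 a3] := cz_y2; have [b1 b2 b3] := cz_uu; have [c1 c2 c3] := cz_ww.
have z0 : (cz 0 z)%:r / Dz%:r = k'%:r * ((cz 0 y)%:r / Dz%:r) + i%:r.
  rewrite /z !czD !czZ a1 b1 c1 !mulr0 !addr0 intrD (intrM _ k') (intrM _ i Dz); by field.
have z1 : (cz 1 z)%:r / Dz%:r = k'%:r * ((cz 1 y)%:r / Dz%:r) + j%:r.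
  rewrite /z !czD !czZ a2 b2 c2 !mulr0 ?addr0 ?add0r intrD (intrM _ k') (intrM _ j Dz); by field.
have z2 : (cz 2%:R z)%:r / Dz%:r = k'%:r * ((cz 2%:R y)%:r / Dz%:r) + l%:r.
  rewrite /z !czD !czZ a3 b3 c3 !mulr0 ?addr0 ?add0r intrD (intrM _ k') (intrM _ l Dz); by field.
have hz : in_hull V (X z) by apply: inP_hull; rewrite z0 z1 z2.
have hv := vert_div _ (Hlat _ hz).
apply: hZ; rewrite -z0 -z1 -z2.
have [t0 ht0] := hv 0; have [t1 ht1] := hv 1; have [t2 ht2] := hv 2%:R.
split; [|split]; apply: div_isZ; eassumption.
Qed.


Definition Cmat : 'M[int]_3 := \matrix_(k, j) ((Nm k j) %/ Dz)%Z.

Lemma NC : Nm = Dz *: Cmat.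
Proof.
apply/matrixP => k j; rewrite [RHS]mxE [Cmat k j]mxE mulrC divzK //.
have := index_div (delta_mx j 0) k.
by rewrite /cz -colE mxE.
Qed.

Lemma BC : Bm *m Cmat = 1%:M.
Proof.
have h : Dz *: (Bm *m Cmat) = Dz *: 1%:M by rewrite scalemxAr -NC BN scalemx1.
apply/matrixP => i j; have := congr1 (fun m : 'M[int]_3 => m i j) h; rewrite /= !mxE.
apply: mulfI; rewrite gt_eqF //; exact: Dpos.
Qed.

Lemma CB : Cmat *m Bm = 1%:M.
Proof. exact: mulmx1C BC. Qed.

Definition Tm : 'M[int]_3 := \matrix_(i < 3, j < 3) nth 0 (nth [::] [:: [:: 1; 0; -1]; [:: 0; 1; 0]; [:: 0; 1; -1]] i) j.
Definition Ti : 'M[int]_3 := \matrix_(i < 3, j < 3) nth 0 (nth [::] [:: [:: 1; 1; -1]; [:: 0; 1; 0]; [:: 0; 1; -1]] i) j.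

Lemma TTi : Tm *m Ti = 1%:M.
Proof.
apply/matrixP => i j; rewrite !mxE.
rewrite !big_ord_recr big_ord0 /= !mxE /=.
by case: i => [[|[|[|?]]] ?]; case: j => [[|[|[|?]]] ?].
Qed.

Definition Am := Tm *m Cmat.

Lemma Am_unit : GL3Z Am.
Proof.
rewrite /GL3Z /Am unitmx_mul.
by have [-> _] := mulmx1_unit TTi; have [_ ->] := mulmx1_unit BC.
Qed.

Lemma Am_col (j : 'I_3) : Am *m nth 0 [:: y2; uu; ww] j = Tm *m delta_mx j 0.
Proof. by rewrite -colB /Am !mulmxA -(mulmxA Tm) CB mulmx1. Qed.


Lemma ptE (a b c : int) (i : 'I_3) : pt a b c i 0 = nth 0 [:: a; b; c] i.
Proof. by rewrite /pt mxE. Qed.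

Lemma Ay2 : Am *m y2 = pt 1 0 0.
Proof.
have := Am_col 0; rewrite /= => ->; apply/matrixP => i k.
by rewrite (ord1 k) -colE !mxE; case: i => [[|[|[|?]]] ?].
Qed.
Lemma Auu : Am *m uu = pt 0 1 1.
Proof.
have := Am_col 1; rewrite /= => ->; apply/matrixP => i k.
by rewrite (ord1 k) -colE !mxE; case: i => [[|[|[|?]]] ?].
Qed.
Lemma Aww : Am *m ww = pt (-1) 0 (-1).
Proof.
have := Am_col 2%:R; rewrite /= => ->; apply/matrixP => i k.
by rewrite (ord1 k) -colE !mxE; case: i => [[|[|[|?]]] ?].
Qed.

Theorem core_main : exists A : 'M[int]_3, GL3Z A /\
  [/\ A *m y1 = pt (-1) (-1) 0, A *m y2 = pt 1 0 0, A *m y3 = pt 1 1 1,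
      A *m y4 = pt 0 1 0 & A *m y5 = pt 0 0 (-1)].
Proof.
exists Am; split; first exact: Am_unit.
have e3 : Am *m y3 = pt 1 1 1.
  rewrite y3E mulmxDr Ay2 Auu; apply/matrixP => i k.
  by rewrite (ord1 k) !mxE; case: i => [[|[|[|?]]] ?].
have e4 : Am *m y4 = pt 0 1 0.
  rewrite y4E mulmxDr mulmxDr Ay2 Auu Aww; apply/matrixP => i k.
  by rewrite (ord1 k) !mxE; case: i => [[|[|[|?]]] ?].
have e5 : Am *m y5 = pt 0 0 (-1).
  rewrite y5E mulmxDr Ay2 Aww; apply/matrixP => i k.
  by rewrite (ord1 k) !mxE; case: i => [[|[|[|?]]] ?].
split => //; last exact: Ay2.
rewrite y1E mulmxN mulmxDr Ay2 e4; apply/matrixP => i k.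
by rewrite (ord1 k) !mxE; case: i => [[|[|[|?]]] ?].
Qed.

End Core.

Section Main.
Variable R : realType.

Lemma rem_perm (V L : seq lat) (v : lat) : v \in V -> perm_eq V (v :: L) -> perm_eq (rem v V) L.
Proof.
move=> vV pV; rewrite -(perm_cons v).
by apply: perm_trans pV; rewrite perm_sym; apply: perm_to_rem.
Qed.

Lemma drop_int (V L : seq lat) (v : lat) : uniq V -> minimal_fano R V -> v \in V ->
  perm_eq V (v :: L) -> ~ origin_interior R L.
Proof.
move=> uV [Hf Hmin] vV pV HL.
have := not_fano_rem uV Hf vV (Hmin v vV); apply.
apply: (interior_perm (rem_uniq _ uV)) HL.
by rewrite perm_sym; apply: rem_perm.
Qed.

Lemma bridge (x1 x2 x3 x4 x5 y1 y2 y3 y4 y5 : lat) :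
  uniq [:: x1; x2; x3; x4; x5] -> minimal_fano R [:: x1; x2; x3; x4; x5] ->
  perm_eq [:: x1; x2; x3; x4; x5] [:: y1; y2; y3; y4; y5] -> y2 + y4 = y3 + y5 ->
  exists A : 'M[int]_3, GL3Z A /\
    perm_eq [seq A *m v | v <- [:: x1; x2; x3; x4; x5]]
            [:: pt 1 0 0; pt 0 1 0; pt (-1) (-1) 0; pt 1 1 1; pt 0 0 (-1)].
Proof.
move=> uV mV pV hpar.
have uY : uniq [:: y1; y2; y3; y4; y5] by rewrite -(perm_uniq pV).
have [[Hvert [Hlat Hint]] _] := mV.
have memY : forall v, v \in [:: y1; y2; y3; y4; y5] -> v \in [:: x1; x2; x3; x4; x5].
  by move=> v; rewrite (perm_mem pV).
have pp : forall L v, v \in [:: y1; y2; y3; y4; y5] ->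
    perm_eq [:: y1; y2; y3; y4; y5] (v :: L) -> ~ origin_interior R L.
  move=> L v hv hp; apply: (drop_int _ _ _ uV mV (memY _ hv)).
  exact: perm_trans pV hp.
have HlatY : forall p : lat, in_hull [:: y1; y2; y3; y4; y5] (toR R p) ->
    p \in [:: y1; y2; y3; y4; y5] \/ p = 0.
  move=> p hp; have pV' : perm_eq [:: y1; y2; y3; y4; y5] [:: x1; x2; x3; x4; x5] by rewrite perm_sym.
  case: (Hlat p (hull_perm uV pV' hp)) => [h|->]; last by right.
  by left; rewrite -(perm_mem pV).
have [A [HA [e1 e2 e3 e4 e5]]] := core_main R _ _ _ _ _ hpar
  (interior_perm uY pV Hint)
  (pp [:: y1; y3; y4; y5] y2 ltac:(by rewrite !inE eqxx !orbT) ltac:(by apply/permP => P /=; lia))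
  (pp [:: y1; y2; y4; y5] y3 ltac:(by rewrite !inE eqxx !orbT) ltac:(by apply/permP => P /=; lia))
  (pp [:: y1; y2; y3; y5] y4 ltac:(by rewrite !inE eqxx !orbT) ltac:(by apply/permP => P /=; lia))
  (pp [:: y1; y2; y3; y4] y5 ltac:(by rewrite !inE eqxx !orbT) ltac:(by apply/permP => P /=; lia))
  HlatY.
exists A; split => //.
apply: perm_trans (perm_map _ pV) _.
rewrite /= e1 e2 e3 e4 e5.
by apply/permP => P /=; lia.
Qed.

End Main.

Theorem lemma4p5 (R : realType) (x1 x2 x3 x4 x5 : 'cV[int]_3) :
  uniq [:: x1; x2; x3; x4; x5] ->
  minimal_fano R [:: x1; x2; x3; x4; x5] ->
  [\/ x2 + x4 = x3 + x5, x2 + x3 = x4 + x5 | x2 + x5 = x3 + x4] ->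
  exists A : 'M[int]_3, GL3Z A /\
    perm_eq [seq A *m v | v <- [:: x1; x2; x3; x4; x5]]
            [:: pt 1 0 0; pt 0 1 0; pt (-1) (-1) 0; pt 1 1 1; pt 0 0 (-1)].
Proof.
move=> uV mV [h|h|h].
- exact: (@bridge R x1 x2 x3 x4 x5 x1 x2 x3 x4 x5 uV mV (perm_refl _) h).
- apply: (@bridge R x1 x2 x3 x4 x5 x1 x2 x4 x3 x5 uV mV) => //.
  by apply/permP => P /=; lia.
- apply: (@bridge R x1 x2 x3 x4 x5 x1 x2 x3 x5 x4 uV mV) => //.
  by apply/permP => P /=; lia.
Qed.
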